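(* Let $\mathcal F$ be a finite-dimensional linear subspace of $C(\mathbf X)$ equipped with a norm $\|\cdot\|_{\mathcal F}$, and let $L\ge1$ be such that $\mathcal H_\epsilon(U_{\mathcal F})\le L\log\frac1\epsilon$ for all $\epsilon\in(0,1/2]$. There exists a strategy for Predictor that guarantees, for all $N=2,3,\dots$, all $F\in\mathcal F$ and all moves of Reality, $$\sum_{n=1}^N(y_n-\mu_n)^2\le\sum_{n=1}^N(y_n-F(x_n))^2+CL\left(\log^+\|F\|_{\mathcal F}+\log N\right),$$ where $C$ is a universal constant.
   Context: Protocol: $\mathbf X$ a nonempty topological space; at each round $n$ Reality announces $x_n\in\mathbf X$, Predictor announces $\mu_n\in\mathbb R$, Reality announces $y_n\in[-1,1]$; a strategy for Predictor maps each history $(x_1,y_1,\dots,x_{n-1},y_{n-1},x_n)$ to $\mu_n$. $C(\mathbf X)$: bounded continuous real functions on $\mathbf X$ with supremum norm. $U_{\mathcal F}=\{F\in\mathcal F:\|F\|_{\mathcal F}\le1\}$. $\mathcal H_\epsilon(A)$: $\log_2$ of the minimal number of points of $A$ forming an $\epsilon$-net for $A$ in the supremum metric. $\log=\log_2$, and $\log^+t=\log t$ for $t\ge1$, $\log^+t=0$ otherwise. *)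

(* Defs.v *)
From HB Require Import structures.
From mathcomp Require Import all_boot all_order all_algebra.
From mathcomp Require Import all_classical all_reals all_analysis.
From mathcomp Require Import Rstruct Rstruct_topology.
From Stdlib Require Import Rdefinitions.
Set Implicit Arguments. Unset Strict Implicit. Unset Printing Implicit Defensive.
Import Order.TTheory GRing.Theory Num.Theory.
Local Open Scope classical_set_scope.
Local Open Scope ring_scope.

Definition log2 (t : R) : R := ln t / ln 2.
Definition logp (t : R) : R := if 1 <= t then log2 t else 0.

Section FunSpace.
Variable X : topologicalType.

Definition CX (f : X -> R) : Prop :=
  continuous f /\ exists M : R, forall x, `|f x| <= M.

Definition lin_subspace_CX (F : set (X -> R)) : Prop :=
  F `<=` CX /\ F (fun _ => 0) /\
  (forall f g, F f -> F g -> F (fun x => f x + g x)) /\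
  (forall (a : R) f, F f -> F (fun x => a * f x)).

Definition finite_dim (F : set (X -> R)) : Prop :=
  exists (n : nat) (b : 'I_n -> X -> R), (forall i, F (b i)) /\
    forall f, F f -> exists c : 'I_n -> R, f = fun x => \sum_(i < n) c i * b i x.

Definition is_norm_on (F : set (X -> R)) (nF : (X -> R) -> R) : Prop :=
  (forall f, F f -> 0 <= nF f) /\
  (forall f, F f -> nF f = 0 -> f = (fun _ => 0)) /\
  (forall (a : R) f, F f -> nF (fun x => a * f x) = `|a| * nF f) /\
  (forall f g, F f -> F g -> nF (fun x => f x + g x) <= nF f + nF g).

Definition unit_ball (F : set (X -> R)) (nF : (X -> R) -> R) : set (X -> R) :=
  [set f | F f /\ nF f <= 1].

(* g_0,...,g_{k-1}, points of A, form an eps-net for A in the supremum metric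
   (sup_x |f x - g x| <= eps is written pointwise) *)
Definition has_net (A : set (X -> R)) (eps : R) (k : nat) : Prop :=
  exists g : 'I_k -> X -> R, (forall i, A (g i)) /\
    forall f, A f -> exists i, forall x, `|f x - g i x| <= eps.

Definition covering_number (A : set (X -> R)) (eps : R) (k : nat) : Prop :=
  has_net A eps k /\ forall j, has_net A eps j -> leq k j.

Definition metric_entropy_is (A : set (X -> R)) (eps h : R) : Prop :=
  exists k, covering_number A eps k /\ h = log2 k%:R.

Definition strategy := seq (X * R) -> X -> R.

(* Predictor's move at (0-based) round n, given Reality's moves xs, ys *)
Definition pred_move (S : strategy) (xs : nat -> X) (ys : nat -> R) (n : nat) : R :=
  S [seq (xs i, ys i) | i <- iota 0 n] (xs n).

End FunSpace.

(* Main.v *)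
Require Import Defs.
From HB Require Import structures.
From mathcomp Require Import all_boot all_order all_algebra.
From mathcomp Require Import all_classical all_reals all_analysis.
From mathcomp Require Import Rstruct Rstruct_topology.
From Stdlib Require Import Rdefinitions.
From mathcomp Require Import ring lra.
Import Order.TTheory GRing.Theory Num.Theory.
Local Open Scope ring_scope.

Lemma expR_le_inv (w q : R) : 0 < q -> q <= expR (- w) -> expR w <= q^-1.
Proof.
move=> q0 hq.
have e : expR w = (expR (- w))^-1 by rewrite expRN invrK.
rewrite e; rewrite lef_pV2 ?posrE ?expR_gt0 //.
Qed.

Lemma exp_key (z : R) : -1/8 <= z -> z <= 1 -> expR (z - z^+2) <= 1 + z.
Proof.
move=> h1 h2.
have [z0|z0] := leP 0 z.
  have q0 : 0 < 1 - (z - z^+2) by nra.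
  apply: le_trans (@expR_le_inv (z - z^+2) _ q0 _) _.
    by have := expR_ge1Dx (- (z - z^+2)); lra.
  rewrite -[X in X <= _]mul1r ler_pdivrMr //; nra.
set t := - (z - z^+2).
have t0 : 0 <= t by rewrite /t; nra.
have q0 : 0 < (1 + t/2)^+2 by nra.
apply: le_trans (@expR_le_inv (z - z^+2) _ q0 _) _.
  have -> : - (z - z^+2) = t / 2 + t / 2 by rewrite /t; field.
  rewrite exp.expRD -expr2 lerXn2r ?nnegrE //.
    by lra.
  exact: expR_ge1Dx.
rewrite -[X in X <= _]mul1r ler_pdivrMr // /t; nra.
Qed.

Lemma mix_pt (y a mu : R) : -1 <= y <= 1 -> -1 <= a <= 1 -> -1 <= mu <= 1 ->
  expR (- (1/16) * (y - a)^+2) <=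
  expR (- (1/16) * (y - mu)^+2) * (1 + (1/8) * (y - mu) * (a - mu)).
Proof.
move=> /andP[y1 y2] /andP[a1 a2] /andP[m1 m2].
set z := (1/8) * (y - mu) * (a - mu).
have e : - (1/16) * (y - a)^+2 = - (1/16) * (y - mu)^+2 + (z - (a - mu)^+2 / 16).
  by rewrite /z; field.
rewrite e exp.expRD ler_pM2l ?expR_gt0 //.
have zl : -1/8 <= z.
  have h1 : 0 <= (mu - (y + a)/2)^+2 by apply: sqr_ge0.
  have h2 : (y - a)^+2 <= 4.
    have h3 : 0 <= (2 - (y-a)) * (2 + (y - a)) by apply: mulr_ge0; lra.
    rewrite expr2; lra.
  have -> : z = ((mu - (y + a)/2)^+2 - (y - a)^+2 / 4) / 8 by rewrite /z; field.
  lra.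
have zu : z <= 1 by rewrite /z; nra.
eapply le_trans; last exact (exp_key z zl zu).
rewrite ler_expR.
have : z^+2 <= (a - mu)^+2 / 16.
  rewrite /z.
  have hu : (y - mu)^+2 <= 4.
    have h3 : 0 <= (2 - (y-mu)) * (2 + (y - mu)) by apply: mulr_ge0; lra.
    rewrite expr2; lra.
  have ha : 0 <= (a - mu)^+2 by apply: sqr_ge0.
  have -> : (1 / 8 * (y - mu) * (a - mu)) ^+ 2 = (y - mu)^+2 * (a - mu)^+2 / 64 by field.
  nra.
lra.
Qed.

Lemma lin2 m (k : nat -> nat) (p q : nat -> nat -> R) (al be : R) :
  \sum_(j < m) \sum_(i < k j) (al * p j i + be * q j i) =
  al * \sum_(j < m) \sum_(i < k j) p j i + be * \sum_(j < m) \sum_(i < k j) q j i.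
Proof.
rewrite !mulr_sumr -big_split /=; apply: eq_bigr => j _.
by rewrite !mulr_sumr -big_split.
Qed.

Lemma mix_sum m (k : nat -> nat) (p a : nat -> nat -> R) (y : R) :
  (forall j i, 0 <= p j i) -> (forall j i, -1 <= a j i <= 1) -> -1 <= y <= 1 ->
  0 < \sum_(j < m) \sum_(i < k j) p j i ->
  \sum_(j < m) \sum_(i < k j) p j i * expR (- (1/16) * (y - a j i)^+2) <=
  (\sum_(j < m) \sum_(i < k j) p j i) *
  expR (- (1/16) * (y - (\sum_(j < m) \sum_(i < k j) p j i * a j i) /
                        (\sum_(j < m) \sum_(i < k j) p j i))^+2).
Proof.
move=> p0 a1 y1.
set P := \sum_(j < m) \sum_(i < k j) p j i.
set A := \sum_(j < m) \sum_(i < k j) p j i * a j i.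
move=> P0.
have AP : A <= P.
  apply: ler_sum => j _; apply: ler_sum => i _.
  have := a1 j i; have := p0 j i; move=> h1 /andP[h2 h3]; nra.
have AP' : - P <= A.
  rewrite -sumrN; apply: ler_sum => j _; rewrite -sumrN; apply: ler_sum => i _.
  have := a1 j i; have := p0 j i; move=> h1 /andP[h2 h3]; nra.
set mu := A / P.
have muP : mu * P = A by rewrite /mu mulfVK // gt_eqF.
have mu1 : -1 <= mu <= 1.
  apply/andP; split.
    rewrite /mu ler_pdivlMr //; lra.
  rewrite /mu ler_pdivrMr //; lra.
set E := expR (- (1/16) * (y - mu)^+2).
set c := (1/8) * (y - mu).
apply: (le_trans (y := \sum_(j < m) \sum_(i < k j) ((E - E * c * mu) * p j i + (E * c) * (p j i * a j i)))).
  apply: ler_sum => j _; apply: ler_sum => i _.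
  have -> : (E - E * c * mu) * p j i + (E * c) * (p j i * a j i) =
            p j i * (E * (1 + (1/8) * (y - mu) * (a j i - mu))) by rewrite /c; ring.
  apply: ler_wpM2l; first exact: p0.
  exact: mix_pt.
rewrite (lin2 m k p (fun j i => p j i * a j i)) -/P -/A -muP.
have -> : (E - E * c * mu) * P + E * c * (mu * P) = P * E by ring.
done.
Qed.

Set Implicit Arguments. Unset Strict Implicit.

Definition clip (t : R) := Num.max (-1) (Num.min 1 t).

Lemma clip_bound t : -1 <= clip t <= 1.
Proof.
rewrite /clip; apply/andP; split; first by rewrite le_max lexx.
rewrite ge_max ge_min lexx /=.
rewrite andbT; lra.
Qed.

Section Strat.
Variable X : topologicalType.
Variables (k : nat -> nat) (g : nat -> nat -> X -> R).

Definition ex (j i : nat) (x : X) := clip (2 ^+ j.+1 * g j i x).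
Definition prior (j : nat) := (2 ^+ j.+1)^-1 / ((k j)%:R : R).
Definition Lam (xs : nat -> X) (ys : nat -> R) (n j i : nat) :=
  if leq j n then 4 * j%:R + \sum_(j <= t < n) (ys t - ex j i (xs t))^+2
  else 4 * n%:R.
Definition wt xs ys n j i := prior j * expR (- (1/16) * Lam xs ys n j i).
Definition mixp xs ys n (x : X) :=
  (\sum_(j < n.+1) \sum_(i < k j) wt xs ys n j i * ex j i x) /
  (\sum_(j < n.+1) \sum_(i < k j) wt xs ys n j i).
Definition mixS (x0 : X) : strategy X := fun h x =>
  mixp (fun t => (nth (x0, 0) h t).1) (fun t => (nth (x0, 0) h t).2) (size h) x.

Lemma Lam_ext xs ys xs' ys' n j i :
  (forall t, (t < n)%nat -> xs t = xs' t /\ ys t = ys' t) ->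
  Lam xs ys n j i = Lam xs' ys' n j i.
Proof.
move=> h; rewrite /Lam; case: ifP => // _; congr (_ + _).
apply: eq_big_nat => t /andP[_ tn]; by have [-> ->] := h t tn.
Qed.

Lemma mixp_ext xs ys xs' ys' n x :
  (forall t, (t < n)%nat -> xs t = xs' t /\ ys t = ys' t) ->
  mixp xs ys n x = mixp xs' ys' n x.
Proof.
move=> h; rewrite /mixp /wt.
by congr (_ / _); apply: eq_bigr => j _; apply: eq_bigr => i _;
  rewrite (Lam_ext _ _ h).
Qed.

Lemma pred_move_mixS x0 xs ys n :
  pred_move (mixS x0) xs ys n = mixp xs ys n (xs n).
Proof.
rewrite /pred_move /mixS size_map size_iota; apply: mixp_ext => t tn.
by rewrite (nth_map 0%N) ?size_iota // nth_iota.
Qed.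


Definition Phi xs ys K n := \sum_(j < K) \sum_(i < k j) wt xs ys n j i.

Hypothesis kpos : forall j, (0 < k j)%nat.

Lemma prior_gt0 j : 0 < prior j.
Proof.
rewrite /prior; apply: divr_gt0; last by rewrite ltr0n kpos.
by rewrite invr_gt0 exprn_gt0.
Qed.

Lemma wt_gt0 xs ys n j i : 0 < wt xs ys n j i.
Proof. by rewrite /wt mulr_gt0 ?prior_gt0 ?expR_gt0. Qed.

Lemma sum_pos m (p : nat -> nat -> R) : (forall j i, 0 < p j i) -> (0 < m)%nat ->
  0 < \sum_(j < m) \sum_(i < k j) p j i.
Proof.
move=> hp; case: m => [//|m] _; rewrite big_ord_recl /=.
have h2 : 0 <= \sum_(i < m) \sum_(i0 < k (lift ord0 i)) p (lift ord0 i) i0.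
  by apply: sumr_ge0 => j _; apply: sumr_ge0 => i _; apply: ltW.
have h1 : 0 < \sum_(i < k 0) p 0%N i.
  have := kpos 0; case: (k 0) => [//|k0] _.
  rewrite big_ord_recl; have : 0 <= \sum_(i < k0) p 0%N (lift ord0 i).
    by apply: sumr_ge0 => i _; apply: ltW.
  have := hp 0%N 0%N; lra.
lra.
Qed.

Lemma avg_bound m (p a : nat -> nat -> R) :
  (forall j i, 0 <= p j i) -> (forall j i, -1 <= a j i <= 1) ->
  0 < \sum_(j < m) \sum_(i < k j) p j i ->
  -1 <= (\sum_(j < m) \sum_(i < k j) p j i * a j i) / (\sum_(j < m) \sum_(i < k j) p j i) <= 1.
Proof.
move=> p0 a1.
set P := \sum_(j < m) \sum_(i < k j) p j i.
set A := \sum_(j < m) \sum_(i < k j) p j i * a j i.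
move=> P0.
have AP : A <= P.
  apply: ler_sum => j _; apply: ler_sum => i _.
  have := a1 j i; have := p0 j i; move=> h1 /andP[h2 h3]; nra.
have AP' : - P <= A.
  rewrite -sumrN; apply: ler_sum => j _; rewrite -sumrN; apply: ler_sum => i _.
  have := a1 j i; have := p0 j i; move=> h1 /andP[h2 h3]; nra.
apply/andP; split.
  rewrite ler_pdivlMr //; lra.
rewrite ler_pdivrMr //; lra.
Qed.

Lemma mixp_bound xs ys n x : -1 <= mixp xs ys n x <= 1.
Proof.
rewrite /mixp; apply: (@avg_bound n.+1 (wt xs ys n) (fun j i => ex j i x)).
- by move=> j i; apply: ltW; apply: wt_gt0.
- by move=> j i; apply: clip_bound.
- by apply: sum_pos => // j i; apply: wt_gt0.
Qed.

Lemma Lam_present xs ys n j i : (j <= n)%nat ->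
  Lam xs ys n.+1 j i = Lam xs ys n j i + (ys n - ex j i (xs n))^+2.
Proof.
move=> jn; rewrite /Lam jn (leqW jn) big_nat_recr //=; ring.
Qed.

Lemma Lam_absent xs ys n j i : (n < j)%nat ->
  Lam xs ys n.+1 j i = Lam xs ys n j i + 4.
Proof.
move=> nj; rewrite /Lam (leqNgt j n) nj /=.
case: ifP => h.
  have e : j = n.+1 by apply/eqP; rewrite eqn_leq h nj.
  rewrite e big_geq // addr0 -natr1; ring.
rewrite -natr1; ring.
Qed.

Lemma Phi_step xs ys K n : (forall t, -1 <= ys t <= 1) -> (n < K)%nat ->
  Phi xs ys K n.+1 <= Phi xs ys K n * expR (- (1/16) * (ys n - mixp xs ys n (xs n))^+2).
Proof.
move=> ysb nK.
set E := expR (- (1/16) * (ys n - mixp xs ys n (xs n))^+2).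
have sp : forall (G : nat -> R), \sum_(j < K) G j = \sum_(j < n.+1) G j + \sum_(n.+1 <= j < K) G j.
  move=> G; by rewrite -!(big_mkord xpredT) (big_cat_nat (n := n.+1) (leq0n _) nK).
rewrite /Phi (sp (fun j => \sum_(i < k j) wt xs ys n.+1 j i))
  (sp (fun j => \sum_(i < k j) wt xs ys n j i)) mulrDl.
apply: lerD.
  have -> : \sum_(j < n.+1) \sum_(i < k j) wt xs ys n.+1 j i =
    \sum_(j < n.+1) \sum_(i < k j) wt xs ys n j i * expR (- (1/16) * (ys n - ex j i (xs n))^+2).
    apply: eq_bigr => j _; apply: eq_bigr => i _.
    rewrite /wt Lam_present; last by have := ltn_ord j; rewrite ltnS.
    by rewrite mulrDr exp.expRD mulrA.
  rewrite /E /mixp.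
  apply: (@mix_sum n.+1 k (wt xs ys n) (fun j i => ex j i (xs n)) (ys n)).
  - by move=> j i; apply: ltW; apply: wt_gt0.
  - by move=> j i; apply: clip_bound.
  - exact: ysb.
  - by apply: sum_pos => // j i; apply: wt_gt0.
rewrite big_distrl /=; apply: ler_sum_nat => j /andP[nj _].
rewrite mulr_suml; apply: ler_sum => i _.
rewrite /wt Lam_absent // mulrDr exp.expRD -mulrA ler_wpM2l ?(ltW (prior_gt0 _)) //.
rewrite ler_pM2l ?expR_gt0 // ler_expR.
have := mixp_bound xs ys n (xs n); have := ysb n.
move=> /andP[a b] /andP[c d].
have : (ys n - mixp xs ys n (xs n)) ^+ 2 <= 4.
  have h3 : 0 <= (2 - (ys n - mixp xs ys n (xs n))) * (2 + (ys n - mixp xs ys n (xs n))).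
    by apply: mulr_ge0; lra.
  rewrite expr2; lra.
lra.
Qed.


Lemma Phi_iter xs ys K n : (forall t, -1 <= ys t <= 1) -> (n <= K)%nat ->
  Phi xs ys K n <= Phi xs ys K 0 *
    expR (- (1/16) * \sum_(t < n) (ys t - mixp xs ys t (xs t))^+2).
Proof.
move=> ysb; elim: n => [|n IH] nK.
  by rewrite big_ord0 mulr0 exp.expR0 mulr1.
eapply le_trans; first exact: Phi_step.
rewrite big_ord_recr mulrDr exp.expRD.
set E := expR (- (1/16) * (ys n - mixp xs ys n (xs n))^+2).
set A := expR _.
rewrite mulrA.
apply: ler_wpM2r; first by apply: ltW; apply: expR_gt0.
by apply: IH; apply: ltnW.
Qed.

Lemma geom_sum K : \sum_(j < K) (2 ^+ j.+1)^-1 = 1 - (2 ^+ K)^-1 :> R.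
Proof.
elim: K => [|K IH]; first by rewrite big_ord0 expr0 invr1 subrr.
rewrite big_ord_recr /= IH !exprS.
have h : 2 ^+ K != 0 :> R by rewrite expf_neq0.
by field.
Qed.

Lemma Phi0_le1 xs ys K : Phi xs ys K 0 <= 1.
Proof.
rewrite /Phi.
have -> : \sum_(j < K) \sum_(i < k j) wt xs ys 0 j i = \sum_(j < K) (2 ^+ j.+1)^-1.
  apply: eq_bigr => j _.
  have -> : \sum_(i < k j) wt xs ys 0 j i = \sum_(i < k j) prior j.
    apply: eq_bigr => i _; rewrite /wt /Lam.
    case: ifP => h; last by rewrite mulr0 mulr0 exp.expR0 mulr1.
    rewrite big_geq // addr0.
    have -> : (j : nat) = 0%nat by apply/eqP; rewrite -leqn0.
    by rewrite mulr0 mulr0 exp.expR0 mulr1.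
  rewrite sumr_const card_ord /prior -[X in X = _]mulr_natr mulrAC -mulrA divff ?mulr1 //.
  by rewrite pnatr_eq0 -lt0n kpos.
rewrite geom_sum.
have : 0 <= (2 ^+ K : R)^-1 by rewrite invr_ge0 exprn_ge0.
lra.
Qed.

Lemma sum_ge_term m (F : nat -> R) i : (forall j, 0 <= F j) -> (i < m)%nat ->
  F i <= \sum_(j < m) F j.
Proof.
move=> F0 im; rewrite (bigD1 (Ordinal im)) //=.
have : 0 <= \sum_(i0 < m | i0 != Ordinal im) F i0 by apply: sumr_ge0.
lra.
Qed.

Lemma wt_le_Phi xs ys K N j i : (j < K)%nat -> (i < k j)%nat ->
  wt xs ys N j i <= Phi xs ys K N.
Proof.
move=> jK ik; rewrite /Phi.
have H1 : forall j', 0 <= \sum_(i < k j') wt xs ys N j' i.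
  by move=> j'; apply: sumr_ge0 => i' _; apply: ltW; apply: wt_gt0.
apply: le_trans (sum_ge_term (F := fun j => \sum_(i < k j) wt xs ys N j i) H1 jK).
have H2 : forall i', 0 <= wt xs ys N j i' by move=> i'; apply: ltW; apply: wt_gt0.
exact: (sum_ge_term (F := fun i => wt xs ys N j i) H2 ik).
Qed.

Lemma Lam_le xs ys N j i :
  Lam xs ys N j i <= 4 * j%:R + \sum_(t < N) (ys t - ex j i (xs t))^+2.
Proof.
rewrite /Lam; case: ifP => h.
  rewrite lerD2l -(big_mkord xpredT (fun t => (ys t - ex j i (xs t))^+2)) (big_cat_nat (n := j) (leq0n _) h) /=.
  have : 0 <= \sum_(0 <= i0 < j) (ys i0 - ex j i (xs i0)) ^+ 2.
    by apply: sumr_ge0 => t _; apply: sqr_ge0.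
  lra.
have : 0 <= \sum_(t < N) (ys t - ex j i (xs t)) ^+ 2.
  by apply: sumr_ge0 => t _; apply: sqr_ge0.
have : (N%:R : R) <= j%:R by rewrite ler_nat ltnW // ltnNge h.
lra.
Qed.

Lemma prior_exp j : prior j = expR (- (j.+1%:R * ln 2 + ln (k j)%:R)).
Proof.
rewrite expRN exp.expRD expRM_natl !lnK ?posrE ?ltr0n ?kpos //.
by rewrite /prior invfM.
Qed.

Lemma regret (xs : nat -> X) (ys : nat -> R) N j i : (forall t, -1 <= ys t <= 1) -> (i < k j)%nat ->
  \sum_(t < N) (ys t - mixp xs ys t (xs t))^+2 <=
  4 * j%:R + \sum_(t < N) (ys t - ex j i (xs t))^+2 +
  16 * (j.+1%:R * ln 2 + ln (k j)%:R).
Proof.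
move=> ysb ik.
set K := (N + j).+1.
have jK : (j < K)%nat by rewrite ltnS leq_addl.
have NK : (N <= K)%nat by rewrite ltnW // ltnS leq_addr.
have h1 : wt xs ys N j i <= Phi xs ys K N by exact: wt_le_Phi.
have h2 : Phi xs ys K N <= Phi xs ys K 0 *
    expR (- (1/16) * \sum_(t < N) (ys t - mixp xs ys t (xs t))^+2) by exact: Phi_iter.
have h3 : Phi xs ys K 0 <= 1 by exact: Phi0_le1.
have h4 : wt xs ys N j i <= expR (- (1/16) * \sum_(t < N) (ys t - mixp xs ys t (xs t))^+2).
  apply: (le_trans h1); apply: (le_trans h2).
  by rewrite ler_piMl ?expR_ge0 //.
move: h4; rewrite /wt prior_exp -exp.expRD ler_expR.
have := Lam_le xs ys N j i.
lra.
Qed.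

End Strat.

Unset Implicit Arguments.
Lemma clip_lo (a : R) : a <= -1 -> clip a = -1.
Proof.
move=> h; rewrite /clip minEle; case: lerP => h1; first lra.
by rewrite maxEle; case: lerP => h2; lra.
Qed.

Lemma clip_hi (a : R) : 1 <= a -> clip a = 1.
Proof.
move=> h; rewrite /clip minEle h maxEle; case: lerP => h2 //; lra.
Qed.

Lemma clip_mid (a : R) : -1 <= a -> a <= 1 -> clip a = a.
Proof.
move=> h h'; rewrite /clip minEle; case: lerP => h1.
  by rewrite maxEle; case: lerP => h2; lra.
by rewrite maxEle; case: lerP => h2; lra.
Qed.

Lemma clip_cases (a : R) : (a <= -1 /\ clip a = -1) \/ (1 <= a /\ clip a = 1) \/
  ((-1 <= a) /\ (a <= 1) /\ clip a = a).
Proof.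
case: (boolP (a <= -1)) => h1; first by left; split => //; apply: clip_lo.
case: (boolP (1 <= a)) => h2; first by right; left; split => //; apply: clip_hi.
rewrite -ltNge in h1; rewrite -ltNge in h2.
right; right; split; first lra; split; first lra.
apply: clip_mid; lra.
Qed.

Lemma clip_loss (y a b : R) : -1 <= y <= 1 ->
  (y - clip a)^+2 <= (y - b)^+2 + 4 * `|a - b|.
Proof.
move=> /andP[y1 y2].
have nab : a - b <= `|a - b| /\ b - a <= `|a - b|.
  by split; [exact: ler_norm | rewrite distrC; exact: ler_norm].
case: nab => n1 n2.
have [[ha ea]|[[ha ea]|[ha [ha' ea]]]] := clip_cases a; rewrite ea;
have [[hb eb]|[[hb eb]|[hb [hb' eb]]]] := clip_cases b; nra.
Qed.

Lemma log2E (t : R) : log2 t = ln t / ln 2.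
Proof. by rewrite /log2 !RealsE. Qed.

Lemma ln2_gt0 : 0 < @ln R 2.
Proof. by apply: ln_gt0; lra. Qed.

Lemma ln2_le1 : @ln R 2 <= 1.
Proof.
have h : -1 < 1 :> R by lra.
have := @le_ln1Dx R 1 h. by have -> : 1 + 1 = 2 :> R by []. Qed.

Lemma logp_ge0 (x : R) : 0 <= logp x.
Proof.
rewrite /logp; case: ifP => h //.
rewrite log2E; apply: divr_ge0; [exact: ln_ge0 | exact: ltW ln2_gt0].
Qed.

Lemma pow2_exists (x : R) : exists s : nat, x <= 2 ^+ s /\ (s = 0%nat \/ 2 ^+ s < 2 * x).
Proof.
have ex : exists n : nat, x <= 2 ^+ n.
  case: (lerP x 0) => hx; first by exists 0%nat; rewrite expr0; lra.
  exists (Num.Def.archi_bound x).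
  apply: le_trans (ltW (archi_boundP (ltW hx))) _.
  rewrite -natrX ler_nat; apply: ltnW; exact: ltn_expl.
case: (ex_minnP ex) => s Ps Hmin; exists s; split => //.
case: s Ps Hmin => [|s] Ps Hmin; first by left.
right; case: (boolP (x <= 2 ^+ s)) => h.
  by have := Hmin s h; rewrite ltnn.
rewrite -ltNge in h; rewrite exprS; lra.
Qed.

Lemma logbound (x : R) (s : nat) : 2 ^+ s.+1 < 2 * x -> s.+1%:R <= 1 + logp x.
Proof.
move=> h.
have x1 : 1 <= x.
  have : 1 <= 2 ^+ s :> R by apply: exprn_ege1; lra.
  rewrite exprS in h; lra.
rewrite /logp x1 log2E.
have x0 : 0 < x by lra.
have hl : ln (2 ^+ s.+1) < ln (2 * x).
  by rewrite ltr_ln // posrE ?exprn_gt0 // ?mulr_gt0 //; lra.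
have x0' : x \in Num.pos by rewrite posrE.
have t0 : (2 : R^o) \in Num.pos by rewrite posrE; lra.
rewrite lnXn // (lnM t0 x0') in hl.
have l2 := ln2_gt0.
rewrite -[_ *+ s.+1]mulr_natr in hl.
rewrite -(ler_pM2r l2) mulrDl mul1r mulfVK; last by rewrite gt_eqF.
rewrite [X in X <= _]mulrC; lra.
Qed.

Local Open Scope classical_set_scope.
Local Open Scope ring_scope.

Theorem mainTheorem7 :
  exists C : R,
  forall (X : topologicalType) (x0 : X)
         (F : set (X -> R)) (nF : (X -> R) -> R) (L : R),
    lin_subspace_CX F -> finite_dim F -> is_norm_on F nF ->
    1 <= L ->
    (forall eps : R, 0 < eps -> eps <= 1 / 2 ->
       exists h : R, metric_entropy_is (unit_ball F nF) eps h /\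
                     h <= L * log2 (eps^-1)) ->
    exists S : strategy X,
      forall (N : nat) (f : X -> R) (xs : nat -> X) (ys : nat -> R),
        leq 2 N -> F f -> (forall n, -1 <= ys n <= 1) ->
        \sum_(n < N) (ys n - pred_move S xs ys n) ^+ 2
          <= \sum_(n < N) (ys n - f (xs n)) ^+ 2
             + C * L * (logp (nF f) + log2 N%:R).
Proof.
exists 156.
move=> X x0 F nF L [Fsub [F0 [Fadd Fscal]]] _ [n0 [n_def [n_hom n_tri]]] L1 Hent.
have z0 : unit_ball F nF (fun _ => 0).
  split => //.
  have := n_hom 0 (fun _ => 0) F0; rewrite normr0 mul0r.
  by move->; lra.
have l2 := ln2_gt0.
have t0 : (2 : R^o) \in Num.pos by rewrite posrE; lra.
have Hnet : forall j : nat, exists kg : nat * (nat -> X -> R),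
  [/\ (0 < kg.1)%nat,
  (forall f, unit_ball F nF f -> exists i, (i < kg.1)%nat /\
      forall x, `|f x - kg.2 i x| <= (4 ^+ j.+1)^-1) &
  ln (kg.1)%:R <= 2 * j.+1%:R * L * ln 2].
  move=> j.
  have e0 : 0 < (4 ^+ j.+1)^-1 :> R by rewrite invr_gt0 exprn_gt0.
  have e1 : (4 ^+ j.+1)^-1 <= 1/2 :> R.
    have q : 4 <= 4 ^+ j.+1 :> R.
      rewrite exprS; have : 1 <= 4 ^+ j :> R by apply: exprn_ege1; lra.
      move=> h; nra.
    rewrite mul1r lef_pV2 ?posrE ?exprn_gt0 //; lra.
  have [h [[kk [[[gg [gU gnet]] kmin] hdef]] hle]] := Hent _ e0 e1.
  exists (kk, fun i => match (insub i : option 'I_kk) with Some o => gg o | None => fun _ => 0 end).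
  split => /=.
  - case: (gnet _ z0) => o1 _; case: o1 => o1 ok; exact: (leq_ltn_trans (leq0n o1) ok).
  - move=> f Uf; case: (gnet f Uf) => o1 ho; exists o1; split; first exact: ltn_ord.
    by move=> x; rewrite valK; apply: ho.
  - rewrite invrK hdef !log2E in hle.
    have l4 : ln (4 ^+ j.+1) = 2 * j.+1%:R * @ln R 2.
      rewrite lnXn; last lra.
      have -> : 4 = 2 * 2 :> R by rewrite -natrM.
      rewrite (lnM t0 t0) -[_ *+ j.+1]mulr_natr; ring.
    rewrite l4 mulfK ?gt_eqF // ler_pdivrMr // in hle.
    nra.
case: (choice Hnet) => kg Hkg.
pose k := fun j => (kg j).1.
pose g := fun j => (kg j).2.
have kpos : forall j, (0 < k j)%nat by move=> j; case: (Hkg j).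
exists (mixS k g x0).
move=> N f xs ys N2 Ff ysb.
under eq_bigr do rewrite pred_move_mixS.
have [s1 [Ns1 hs1]] := pow2_exists N%:R.
have [s2 [fs2 hs2]] := pow2_exists (nF f).
case: s1 Ns1 hs1 => [|s1] Ns1 hs1.
  by exfalso; move: Ns1; rewrite expr0 lern1; move: N2; clear; case: N => [|[|]].
case: hs1 => [//|hs1].
have hS1 := logbound _ _ hs1.
have hS2 : s2%:R <= 1 + logp (nF f).
  case: s2 fs2 hs2 => [|s2] fs2 hs2; first by have := logp_ge0 (nF f); lra.
  case: hs2 => [//|hs2]; exact: logbound.
set j := (s1 + s2)%nat.
have ej : j.+1 = (s1.+1 + s2)%nat by rewrite /j addSn.
set r := 2 ^+ j.+1 : R.
have rpos : 0 < r by rewrite /r exprn_gt0.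
have p2 : 1 <= 2 ^+ s2 :> R by apply: exprn_ege1; lra.
have p1 : 1 <= 2 ^+ s1.+1 :> R by apply: exprn_ege1; lra.
have er : r = 2 ^+ s1.+1 * 2 ^+ s2 by rewrite /r ej exprD.
have Ns : N%:R <= r by rewrite er; nra.
have fs : nF f <= r by rewrite er; nra.
have Ufr : unit_ball F nF (fun x => r^-1 * f x).
  split; first exact: Fscal.
  rewrite n_hom // ger0_norm; last by rewrite invr_ge0 ltW.
  by rewrite mulrC ler_pdivrMr // mul1r.
have [_ Hg Hl] := Hkg j.
have [i [ik hi]] := Hg _ Ufr.
have hreg := regret g kpos xs N ysb ik.
have e4 : (4 ^+ j.+1)^-1 = r^-1 * r^-1 :> R.
  have e22 : 4 = 2 * 2 :> R by rewrite -natrM.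
  by rewrite /r -invfM -exprMn -e22.
have hex : \sum_(t < N) (ys t - ex g j i (xs t))^+2 <=
           \sum_(t < N) (ys t - f (xs t))^+2 + 4.
  apply: (le_trans (y := \sum_(t < N) ((ys t - f (xs t))^+2 + 4 * r^-1))).
    apply: ler_sum => t _; rewrite /ex.
    apply: le_trans (clip_loss (ys t) (2 ^+ j.+1 * g j i (xs t)) (f (xs t)) (ysb t)) _.
    rewrite lerD2l ler_pM2l; last lra.
    have := hi (xs t); rewrite e4 => hb.
    have -> : 2 ^+ j.+1 * g j i (xs t) - f (xs t) = - (r * (r^-1 * f (xs t) - g j i (xs t))).
      by rewrite /r /g mulrBr mulrA mulfV ?gt_eqF // mul1r opprB.
    rewrite normrN normrM gtr0_norm //.
    rewrite -ler_pdivlMl // mulrC; exact: hb.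
  rewrite big_split /= sumr_const card_ord lerD2l.
  rewrite -[(4 * r^-1) *+ N]mulr_natr -mulrA.
  have : r^-1 * N%:R <= 1 by rewrite mulrC ler_pdivrMr // mul1r.
  lra.
have [_ _ hk] := Hkg j.
rewrite -/(k j) in hk.
have hN1 : 1 <= log2 N%:R.
  rewrite log2E ler_pdivlMr // mul1r ler_ln ?posrE //; last by rewrite ltr0n; exact: (leq_trans _ N2).
  by rewrite ler_nat.
have lpN : logp N%:R = log2 N%:R by rewrite /logp ler1n (leq_trans _ N2).
rewrite lpN in hS1.
have hb0 := logp_ge0 (nF f).
have l1 := ln2_le1.
move: hreg.
have -> : j%:R = (j.+1)%:R - 1 :> R by rewrite -natr1; ring.
set S := (j.+1)%:R : R.
have hS : S = s1.+1%:R + s2%:R by rewrite /S ej natrD.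
set a := log2 N%:R. set b := logp (nF f). set l := @ln R 2.
set K := ln (k j)%:R.
set M := \sum_(t < N) (ys t - mixp k g xs ys t (xs t))^+2.
set G := \sum_(t < N) (ys t - f (xs t))^+2.
move: hex; set E := \sum_(t < N) (ys t - ex g j i (xs t))^+2 => hex hreg.
rewrite -/G in hex.
have hk' : K <= 2 * S * L * l by exact: hk.
have l0 : 0 < l by exact: l2.
have l1' : l <= 1 by exact: l1.
have S0 : 0 <= S by rewrite /S ler0n.
have hS1' : s1.+1%:R <= 1 + a :> R by exact: hS1.
have hS2' : s2%:R <= 1 + b :> R by exact: hS2.
have hN1' : 1 <= a by exact: hN1.
have Sab : S <= 3 * a + b by rewrite hS; lra.
have h1 : S * l <= S by rewrite -[X in _ <= X]mulr1 ler_wpM2l.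
have SL0 : 0 <= S * L by apply: mulr_ge0 => //; lra.
have h2 : S * L * l <= S * L by rewrite -[X in _ <= X]mulr1 ler_wpM2l.
have h3 : S <= S * L by rewrite -[X in X <= _]mulr1 ler_wpM2l.
have h4 : S * L <= (3 * a + b) * L by rewrite ler_wpM2r //; lra.
have h5 : 0 <= b * L by apply: mulr_ge0 => //; lra.
lra.
Qed.
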